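(* Let $R$ and $S$ be commutative rings with identity, $f:R\to S$ a ring homomorphism, and $J$ a nonzero proper ideal of $S$. (1) If $J\subseteq\operatorname{Jac}(S)$, then $R\bowtie^f J$ is a pm-ring if and only if $R$ is a pm-ring. (2) For any $R$-module $M$, the trivial extension $R\ltimes M$ is a pm-ring if and only if $R$ is a pm-ring.
   Context: $R\bowtie^f J:=\{(r,f(r)+j)\mid r\in R,\ j\in J\}$, a subring of $R\times S$. $\operatorname{Jac}(S)$ is the Jacobson radical of $S$. The trivial extension $R\ltimes M$ is the ring $R\oplus M$ with multiplication $(r,m)(r',m')=(rr',rm'+r'm)$. A commutative ring is a pm-ring if every prime ideal is contained in a unique maximal ideal. *)

(* Defs.v *)
From HB Require Import structures.
From mathcomp Require Import all_boot all_order all_algebra.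
Set Implicit Arguments. Unset Strict Implicit. Unset Printing Implicit Defensive.
Import GRing.Theory.
Local Open Scope ring_scope.

(* ---------- Ideals of a subring A of a commutative ring T ----------
   Sets are Prop-valued predicates T -> Prop.  Taking A = (fun _ => True)
   gives the usual notions for the ring T itself. *)
Section Ideals.
Variable T : comPzRingType.

Definition subring_of (A : T -> Prop) : Prop :=
  [/\ A 0, A 1, (forall x y, A x -> A y -> A (x - y)) &
      (forall x y, A x -> A y -> A (x * y))].

Definition ideal_in (A I : T -> Prop) : Prop :=
  [/\ (forall x, I x -> A x), I 0,
      (forall x y, I x -> I y -> I (x + y)) &
      (forall a x, A a -> I x -> I (a * x))].

Definition prime_ideal_in (A P : T -> Prop) : Prop :=
  [/\ ideal_in A P, ~ P 1 &
      (forall a b, A a -> A b -> P (a * b) -> P a \/ P b)].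

Definition maximal_ideal_in (A Mx : T -> Prop) : Prop :=
  [/\ ideal_in A Mx, ~ Mx 1 &
      (forall K, ideal_in A K -> (forall x, Mx x -> K x) ->
         (forall x, K x <-> Mx x) \/ K 1)].

Definition pm_subring (A : T -> Prop) : Prop :=
  forall P, prime_ideal_in A P ->
    exists Mx, [/\ maximal_ideal_in A Mx, (forall x, P x -> Mx x) &
      forall Mx', maximal_ideal_in A Mx' -> (forall x, P x -> Mx' x) ->
        forall x, Mx' x <-> Mx x].

End Ideals.

Definition fullset (T : Type) : T -> Prop := fun _ => True.

Definition ideal (T : comPzRingType) (I : T -> Prop) := ideal_in (@fullset T) I.
Definition maximal_ideal (T : comPzRingType) (I : T -> Prop) :=
  maximal_ideal_in (@fullset T) I.
Definition pm_ring (T : comPzRingType) : Prop := pm_subring (@fullset T).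

Definition Jac (T : comPzRingType) : T -> Prop :=
  fun x => forall Mx, maximal_ideal Mx -> Mx x.

Definition amalgamation (R S : comPzRingType) (f : {rmorphism R -> S})
  (J : S -> Prop) : (R * S)%type -> Prop :=
  fun x => exists r j, J j /\ x = (r, f r + j).

Definition triv_ext (R : comPzRingType) (M : lmodType R) : Type := (R * M)%type.

Section TrivExt.
Variables (R : comPzRingType) (M : lmodType R).
Local Notation TE := (triv_ext M).

HB.instance Definition _ := GRing.Zmodule.on TE.

Definition te_one : TE := (1, 0).
Definition te_mul (x y : TE) : TE := (x.1 * y.1, x.1 *: y.2 + y.1 *: x.2).

Lemma te_mulA : associative te_mul.
Proof.
case=> [a m] [b n] [c p]; rewrite /te_mul /=; congr pair; first by rewrite mulrA.
rewrite !scalerDr !scalerA (mulrC c a) (mulrC c b).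
by rewrite addrA.
Qed.

Lemma te_mulC : commutative te_mul.
Proof. by case=> [a m] [b n]; rewrite /te_mul /= mulrC addrC. Qed.

Lemma te_mul1 : left_id te_one te_mul.
Proof. by case=> [a m]; rewrite /te_mul /= mul1r scale1r scaler0 addr0. Qed.

Lemma te_mulDl : left_distributive te_mul +%R.
Proof.
case=> [a m] [b n] [c p]; rewrite /te_mul /=; congr pair; first by rewrite mulrDl.
by rewrite scalerDl scalerDr !addrA; congr (_ + _); rewrite -!addrA; congr (_ + _);
  rewrite addrC.
Qed.

HB.instance Definition _ := GRing.Zmodule_isComPzRing.Build TE
  te_mulA te_mulC te_mul1 te_mulDl.
End TrivExt.

(* Main.v *)
Require Import Defs.
From HB Require Import structures.
From mathcomp Require Import all_boot all_order all_algebra.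
From mathcomp Require Import boolp classical_sets.
Set Implicit Arguments. Unset Strict Implicit. Unset Printing Implicit Defensive.
Import GRing.Theory.
Local Open Scope ring_scope.

Lemma exists_max (T : comPzRingType) (A I : T -> Prop) :
  ideal_in A I -> ~ I 1 ->
  exists M, maximal_ideal_in A M /\ (forall x, I x -> M x).
Proof.
move=> HI HI1.
pose P' : set (set T) := fun X => X = set0 \/ [/\ ideal_in A X, ~ X 1 & forall x, I x -> X x].
have [X [PX maxX]] : exists X, P' X /\ forall B, (X `<` B)%classic -> ~ P' B.
  apply: Zorn_bigcup => F FP Ftot.
  pose U := (\bigcup_(X in F) X)%classic.
  have [[x0 Ux0]|nU] := pselect (exists x, U x); last first.
    left; apply/funext => x; apply/propext; split => // Ux; apply: nU; by exists x.
  case: Ux0 => X0 FX0 X0x0.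
  have idF : forall X x, F X -> X x -> [/\ ideal_in A X, ~ X 1 & forall x, I x -> X x].
    move=> X x FX Xx; case: (FP X FX) => // X0e; by rewrite X0e in Xx.
  have [[AX0 X00 _ _] _ IX0] := idF _ _ FX0 X0x0.
  right; split.
  - split.
    + by move=> x [X FX Xx]; have [[AX _ _ _] _ _] := idF _ _ FX Xx; exact: AX.
    + by exists X0 => //; exact: X00.
    + move=> x y [X1 FX1 X1x] [X2 FX2 X2y].
      have [[_ _ D1 _] _ _] := idF _ _ FX1 X1x.
      have [[_ _ D2 _] _ _] := idF _ _ FX2 X2y.
      case: (Ftot X1 X2 FX1 FX2) => S12.
      * by exists X2 => //; apply: D2 => //; exact: S12.
      * by exists X1 => //; apply: D1 => //; exact: S12.
    + move=> a x Aa [X FX Xx]; have [[_ _ _ M1] _ _] := idF _ _ FX Xx.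
      by exists X => //; exact: M1.
  - by move=> [X FX X1]; have [_ N1 _] := idF _ _ FX X1; exact: N1.
  - by move=> x Ix; exists X0 => //; exact: IX0.
case: PX => [X0|[IX NX1 IXs]].
  exfalso; apply: (maxX I); last by right.
  rewrite X0; split => // H; have [_ I0 _ _] := HI; exact: (H 0 I0).
exists X; split => //; split => // K HK XK.
have [K1|nK1] := pselect (K 1); first by right.
left => x; split; last exact: XK.
move=> Kx; apply: contrapT => nXx; apply: (maxX K); last first.
  by right; split => // y Iy; apply: XK; apply: IXs.
split => // H; exact: nXx (H x Kx).
Qed.

Section Transfer.
Variables (T R : comPzRingType) (A : T -> Prop) (pi : T -> R) (sg : R -> T).
Hypotheses (A0 : A 0) (AD : forall x y, A x -> A y -> A (x + y))
  (AM : forall x y, A x -> A y -> A (x * y)).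
Hypotheses (pi0 : pi 0 = 0) (pi1 : pi 1 = 1) (piD : forall x y, pi (x + y) = pi x + pi y)
  (piM : forall x y, pi (x * y) = pi x * pi y).
Hypotheses (sg0 : sg 0 = 0) (sg1 : sg 1 = 1) (sgD : forall x y, sg (x + y) = sg x + sg y)
  (sgM : forall x y, sg (x * y) = sg x * sg y) (sgA : forall r, A (sg r))
  (pisg : forall r, pi (sg r) = r).
Hypothesis unitA : forall a, A a -> pi a = 1 -> exists b, A b /\ a * b = 1.

Let img (I : T -> Prop) : R -> Prop := fun r => exists x, I x /\ pi x = r.
Let pre (q : R -> Prop) : T -> Prop := fun x => A x /\ q (pi x).

Let img_ideal I : ideal_in A I -> ideal (img I).
Proof.
case=> IA I0 ID IM; split => //.
- by exists 0; rewrite pi0.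
- by move=> _ _ [x [Ix <-]] [y [Iy <-]]; exists (x + y); rewrite piD; split => //; exact: ID.
- move=> a _ _ [x [Ix <-]]; exists (sg a * x); split; first exact: IM.
  by rewrite piM pisg.
Qed.

Let img_proper I : ideal_in A I -> ~ I 1 -> ~ img I 1.
Proof.
case=> IA I0 ID IM nI1 [x [Ix px]]; have [b [Ab xb]] := unitA (IA _ Ix) px.
by apply: nI1; rewrite -xb mulrC; apply: IM.
Qed.

Let pre_ideal q : ideal q -> ideal_in A (pre q).
Proof.
case=> _ q0 qD qM; split.
- by move=> x [].
- by split => //; rewrite pi0.
- by move=> x y [Ax qx] [Ay qy]; split; [exact: AD | rewrite piD; exact: qD].
- by move=> a x Aa [Ax qx]; split; [exact: AM | rewrite piM; exact: qM].
Qed.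

Let pre_img M : maximal_ideal_in A M -> forall x, pre (img M) x <-> M x.
Proof.
case=> HM nM1 maxM.
have Hp : ideal_in A (pre (img M)) by apply: pre_ideal; exact: img_ideal.
have sub : forall x, M x -> pre (img M) x.
  by move=> x Mx; have [MA _ _ _] := HM; split; [exact: MA | exists x].
case: (maxM _ Hp sub) => // [[_ ]]; rewrite pi1 => H1.
by exfalso; apply: (img_proper HM nM1).
Qed.

Let img_max M : maximal_ideal_in A M -> maximal_ideal (img M).
Proof.
move=> HMM; case: (HMM) => HM nM1 maxM; split.
- exact: img_ideal.
- exact: img_proper.
move=> K HK sK.
have Hp := pre_ideal HK.
have sub : forall x, M x -> pre K x.
  by move=> x Mx; have [MA _ _ _] := HM; split; [exact: MA | apply: sK; exists x].
case: (maxM _ Hp sub) => [E|[_]]; last by rewrite pi1; right.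
left => r; split; last exact: sK.
move=> Kr; have /E Ms : pre K (sg r) by split; [exact: sgA | by rewrite pisg].
by exists (sg r); rewrite pisg.
Qed.

Let pre_max m : maximal_ideal m -> maximal_ideal_in A (pre m).
Proof.
case=> Hm nm1 maxm; split.
- exact: pre_ideal.
- by case; rewrite pi1.
move=> K HK sK.
have Hi := img_ideal HK.
have sub : forall r, m r -> img K r.
  by move=> r mr; exists (sg r); rewrite pisg; split => //; apply: sK; split; [exact: sgA | by rewrite pisg].
case: (maxm _ Hi sub) => [E|H1].
  left => x; split; last exact: sK.
  by move=> Kx; have [KA _ _ _] := HK; split; [exact: KA | apply/E; exists x].
right; apply: contrapT => nK1; exact: (img_proper HK nK1 H1).
Qed.

Let pre_prime q : prime_ideal_in (@fullset R) q -> prime_ideal_in A (pre q).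
Proof.
case=> Hq nq1 pq; split.
- exact: pre_ideal.
- by case; rewrite pi1.
move=> a b Aa Ab [_]; rewrite piM => /pq [] // H; [left|right]; by split.
Qed.

Let sec_prime P : prime_ideal_in A P -> prime_ideal_in (@fullset R) (fun r => P (sg r)).
Proof.
case=> [[PA P0 PD PM] nP1 pP]; split.
- split => //.
  + by rewrite sg0.
  + by move=> x y Px Py; rewrite sgD; exact: PD.
  + by move=> a x _ Px; rewrite sgM; exact: PM.
- by rewrite sg1.
by move=> a b _ _; rewrite sgM => /pP; apply.
Qed.

Lemma pm_transfer : pm_subring A <-> pm_ring R.
Proof.
split.
- move=> pmA q Hq.
  have [M [HM PM uM]] := pmA _ (pre_prime Hq).
  exists (img M); split.
  + exact: img_max.
  + move=> r qr; exists (sg r); rewrite pisg; split => //; apply: PM; split; [exact: sgA | by rewrite pisg].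
  + move=> m' Hm' qm' r.
    have E := uM _ (pre_max Hm') (fun x (H : pre q x) => conj H.1 (qm' _ H.2)).
    split.
    * by move=> m'r; exists (sg r); rewrite pisg; split => //; apply/E; split; [exact: sgA | by rewrite pisg].
    * by case=> x [/E [_ ?] <-].
- move=> pmR P HP.
  have [m [Hm pm um]] := pmR _ (sec_prime HP).
  have [HPi nP1 _] := HP.
  have [M [HM PM]] := exists_max HPi nP1.
  exists M; split => // M' HM' PM' x.
  have sub : forall (N : T -> Prop), maximal_ideal_in A N -> (forall x, P x -> N x) ->
      forall r, img N r <-> m r.
    move=> N HN PN; apply: um; first exact: img_max.
    by move=> r Pr; exists (sg r); rewrite pisg; split => //; apply: PN.
  rewrite -(pre_img HM') -(pre_img HM) /pre.
  by rewrite (sub _ HM' PM') (sub _ HM PM).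
Qed.

End Transfer.

Lemma jac_unit (S : comPzRingType) (J : S -> Prop) (j : S) :
  (forall x, J x -> Jac x) -> J j -> exists u, (1 + j) * u = 1.
Proof.
move=> JJ Jj.
pose I := fun x : S => exists s, x = (1 + j) * s.
have HI : ideal I.
  split => //.
  - by exists 0; rewrite mulr0.
  - by move=> _ _ [s ->] [t ->]; exists (s + t); rewrite mulrDr.
  - by move=> a _ _ [s ->]; exists (a * s); rewrite mulrCA.
have [I1|nI1] := pselect (I 1); first by case: I1 => s E; exists s.
have [M [HM IM]] := exists_max HI nI1.
have Mj := JJ _ Jj M HM.
case: HM => [[_ _ MD MM] nM1 _]; exfalso; apply: nM1.
have -> : (1 : S) = (1 + j) + (-1) * j by rewrite mulN1r addrK.
apply: MD; first by apply: IM; exists 1; rewrite mulr1.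
exact: MM.
Qed.

Theorem corollary3p6 :
  (forall (R S : comPzRingType) (f : {rmorphism R -> S}) (J : S -> Prop),
     ideal J -> (exists j, J j /\ j <> 0) -> ~ J 1 ->
     (forall x, J x -> Jac x) ->
     (pm_subring (amalgamation f J) <-> pm_ring R))
  /\
  (forall (R : comPzRingType) (M : lmodType R),
     pm_ring (triv_ext M) <-> pm_ring R).
Proof.
split.
- move=> R S f J HJ _ _ JJ.
  have [_ J0 JD JM] := HJ.
  apply: (@pm_transfer _ _ _ fst (fun r => (r, f r))) => //.
  + by exists 0, 0; rewrite rmorph0 addr0.
  + move=> _ _ [r [j [Jj ->]]] [s [k [Jk ->]]]; exists (r + s), (j + k); split; first exact: JD.
    by rewrite rmorphD /= addrACA.
  + move=> _ _ [r [j [Jj ->]]] [s [k [Jk ->]]]; exists (r * s), (f r * k + j * f s + j * k).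
    split.
      apply JD; [apply JD|]; [apply JM => //| rewrite mulrC; apply JM => // | apply JM => //].
    rewrite rmorphM /=.
    have -> : (r, f r + j) * (s, f s + k) = (r * s, (f r + j) * (f s + k)) by [].
    by congr pair; rewrite mulrDl !mulrDr !addrA.
  + by rewrite rmorph0.
  + by rewrite rmorph1.
  + by move=> r s /=; rewrite rmorphD.
  + by move=> r s /=; rewrite rmorphM.
  + by move=> r; exists r, 0; rewrite addr0.
  + move=> _ [r [j [Jj ->]]] /= r1; subst r.
    have [u Hu] := jac_unit JJ Jj.
    exists (1, u); split.
      exists 1, (u - 1); split.
        have -> : u - 1 = (- u) * j.
          by rewrite -Hu mulrDl mul1r opprD addrA subrr add0r mulNr mulrC.
        exact: JM.
      by rewrite rmorph1 addrC subrK.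
    rewrite rmorph1; have -> : (1, 1 + j) * (1, u) = (1 * 1, (1 + j) * u) :> R * S by []. by rewrite mulr1 Hu.
- move=> R M.
  apply: (@pm_transfer (triv_ext M) R (@fullset _) (fun x : triv_ext M => x.1) (fun r => (r, 0) : triv_ext M)) => //.
  + move=> r s; have -> : (@GRing.add (triv_ext M) (r, 0) (s, 0)) = (r + s, 0 + 0) by [].
    by rewrite addr0.
  + move=> r s; have -> : (@GRing.mul (triv_ext M) (r, 0) (s, 0)) = (r * s, r *: 0 + s *: 0) by [].
    by rewrite !scaler0 addr0.
  + move=> [r m] _ /= r1; subst r; exists (1, - m); split => //.
    have -> : (@GRing.mul (triv_ext M) (1, m) (1, - m)) = (1 * 1, 1 *: (- m) + 1 *: m) by [].
    by rewrite mulr1 !scale1r addNr.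
Qed.
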